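(* Let $d_A,d_B$ be positive integers. Let $\{\mathbf{G}^{(A)}_i\}_{i=0}^{d_A^2-1}$ be a basis of the space of complex $d_A\times d_A$ matrices with $\mathbf{G}^{(A)}_0=\mathbf{I}_{d_A}$, $\mathrm{Tr}(\mathbf{G}^{(A)}_i)=0$ and $\mathrm{Tr}\big((\mathbf{G}^{(A)}_i)^\dagger \mathbf{G}^{(A)}_{i'}\big)=\kappa_A\delta_{ii'}$ for all $i,i'\in\{1,\dots,d_A^2-1\}$, where $\kappa_A\ge 1$; similarly let $\{\mathbf{G}^{(B)}_j\}_{j=0}^{d_B^2-1}$ be such a basis for $d_B\times d_B$ matrices with constant $\kappa_B\ge1$. For a state (positive semidefinite trace-one matrix) $\rho$ on $\mathbb{C}^{d_A}\otimes\mathbb{C}^{d_B}$ define the column vectors $\mathcal{T}^{(A)}\in\mathbb{C}^{d_A^2-1}$, $\mathcal{T}^{(B)}\in\mathbb{C}^{d_B^2-1}$ and the matrix $\mathcal{T}^{(AB)}\in\mathbb{C}^{(d_A^2-1)\times(d_B^2-1)}$ by $t^{(A)}_i=\frac{d_A}{\kappa_A}\mathrm{Tr}\big(\rho(\mathbf{G}^{(A)}_i\otimes \mathbf{I}_{d_B})\big)$, $t^{(B)}_j=\frac{d_B}{\kappa_B}\mathrm{Tr}\big(\rho(\mathbf{I}_{d_A}\otimes \mathbf{G}^{(B)}_j)\big)$, $t^{(AB)}_{ij}=\frac{d_Ad_B}{\kappa_A\kappa_B}\mathrm{Tr}\big(\rho(\mathbf{G}^{(A)}_i\otimes \mathbf{G}^{(B)}_j)\big)$.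 For positive integers $p_1,p_2,q_1,q_2$ and real vectors $\bm u\in\mathbb{R}^{p_1}$, $\bm v\in\mathbb{R}^{p_2}$, $\bm\alpha\in\mathbb{R}^{q_1}$, $\bm\beta\in\mathbb{R}^{q_2}$, define the $(p_1+q_1(d_A^2-1))\times(p_2+q_2(d_B^2-1))$ block matrix $$\mathcal{M}_{\bm u,\bm v,\bm\alpha,\bm\beta}^{(A|B)}(\rho)=\begin{pmatrix}\bm u\bm v^{\rm T} & \bm u\,(\bm\beta\otimes\mathcal{T}^{(B)})^{\rm T}\\ (\bm\alpha\otimes\mathcal{T}^{(A)})\,\bm v^{\rm T} & (\bm\alpha\bm\beta^{\rm T})\otimes\mathcal{T}^{(AB)}\end{pmatrix},$$ where $\otimes$ is the Kronecker product. If $\rho$ is separable, then $$\big\|\mathcal{M}_{\bm u,\bm v,\bm\alpha,\bm\beta}^{(A|B)}(\rho)\big\|_{\rm tr}\le\sqrt{\Big(\|\bm u\|^2+\|\bm\alpha\|^2\frac{d_A^2-d_A}{\kappa_A}\Big)\Big(\|\bm v\|^2+\|\bm\beta\|^2\frac{d_B^2-d_B}{\kappa_B}\Big)}.$$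
   Context: $\|\mathbf{X}\|_{\rm tr}=\mathrm{Tr}\big((\mathbf{X}^\dagger\mathbf{X})^{1/2}\big)$ is the trace norm and $\|\cdot\|$ is the Euclidean norm of a real vector. A state $\rho$ on $\mathbb{C}^{d_A}\otimes\mathbb{C}^{d_B}$ is separable if $\rho=\sum_i p_i\,\rho^{(A)}_i\otimes\rho^{(B)}_i$ with $p_i\ge0$, $\sum_ip_i=1$ and $\rho^{(A)}_i,\rho^{(B)}_i$ pure states on $\mathbb{C}^{d_A}$ and $\mathbb{C}^{d_B}$, respectively. *)

(* Defs.v *)
From HB Require Import structures.
From mathcomp Require Import all_boot all_order all_algebra.
From mathcomp Require Import complex mxtens.
From mathcomp Require Import boolp classical_sets reals.

Set Implicit Arguments.
Unset Strict Implicit.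
Unset Printing Implicit Defensive.

Import Order.TTheory GRing.Theory Num.Theory.
Local Open Scope ring_scope.
Local Open Scope sesquilinear_scope.
Local Open Scope complex_scope.

Section Defs.
Variable R : realType.
Local Notation C := R[i].

Definition dagmx (m n : nat) (X : 'M[C]_(m, n)) : 'M[C]_(n, m) := X ^t*.

Definition psdmx (n : nat) (A : 'M[C]_n) : Prop :=
  dagmx A = A /\ forall v : 'cV[C]_n, 0 <= (dagmx v *m A *m v) 0 0.

Definition is_state (n : nat) (rho : 'M[C]_n) : Prop :=
  psdmx rho /\ \tr rho = 1.

Definition is_pure_state (n : nat) (rho : 'M[C]_n) : Prop :=
  exists psi : 'cV[C]_n, dagmx psi *m psi = 1 /\ rho = psi *m dagmx psi.

Definition separable (dA dB : nat) (rho : 'M[C]_(dA * dB)) : Prop :=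
  exists (k : nat) (p : 'I_k -> R) (rA : 'I_k -> 'M[C]_dA)
         (rB : 'I_k -> 'M[C]_dB),
    [/\ forall i, 0 <= p i,
        \sum_i p i = 1,
        forall i, is_pure_state (rA i) /\ is_pure_state (rB i)
      & rho = \sum_i (p i)%:C *: (rA i *t rB i)].

Definition psd_sqrt (n : nat) (A : 'M[C]_n) : 'M[C]_n :=
  xget 0 [set S | psdmx S /\ S *m S = A].

(* trace norm  ||X||_tr = Tr((X^dagger X)^{1/2})  (a complex number that is
   real and nonnegative) *)
Definition trnorm (m n : nat) (X : 'M[C]_(m, n)) : C :=
  \tr (psd_sqrt (dagmx X *m X)).

Definition enorm (n : nat) (u : 'cV[R]_n) : R :=
  Num.sqrt (\sum_i u i 0 ^+ 2).

(* The family {G_i}_{i=0}^{d^2-1} with G_0 = I and G_{i+1} = G i is a basis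
   of the d x d complex matrices, traceless for i >= 1, and
   Tr(G_i^dagger G_i') = kappa delta_{ii'} for i, i' >= 1. *)
Definition good_basis (d : nat) (kappa : R)
    (G : 'I_(d ^ 2 - 1) -> 'M[C]_d) : Prop :=
  let Gm : 'M[C]_(1 + (d ^ 2 - 1), d * d) :=
    col_mx (mxvec (1%:M : 'M[C]_d)) (\matrix_i mxvec (G i)) in
  [/\ row_free Gm, row_full Gm,
      forall i, \tr (G i) = 0
    & forall i i', \tr (dagmx (G i) *m G i') = kappa%:C * (i == i')%:R].

Definition TA (dA dB : nat) (kA : R) (GA : 'I_(dA ^ 2 - 1) -> 'M[C]_dA)
    (rho : 'M[C]_(dA * dB)) : 'cV[C]_(dA ^ 2 - 1) :=
  \col_i ((dA%:R / kA)%:C * \tr (rho *m (GA i *t (1%:M : 'M[C]_dB)))).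

Definition TB (dA dB : nat) (kB : R) (GB : 'I_(dB ^ 2 - 1) -> 'M[C]_dB)
    (rho : 'M[C]_(dA * dB)) : 'cV[C]_(dB ^ 2 - 1) :=
  \col_j ((dB%:R / kB)%:C * \tr (rho *m ((1%:M : 'M[C]_dA) *t GB j))).

Definition TAB (dA dB : nat) (kA kB : R)
    (GA : 'I_(dA ^ 2 - 1) -> 'M[C]_dA) (GB : 'I_(dB ^ 2 - 1) -> 'M[C]_dB)
    (rho : 'M[C]_(dA * dB)) : 'M[C]_(dA ^ 2 - 1, dB ^ 2 - 1) :=
  \matrix_(i, j) ((dA%:R * dB%:R / (kA * kB))%:C
                   * \tr (rho *m (GA i *t GB j))).

Definition cmx (m n : nat) (X : 'M[R]_(m, n)) : 'M[C]_(m, n) :=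
  map_mx (fun x => x%:C) X.

Definition Mmat (dA dB : nat) (kA kB : R)
    (GA : 'I_(dA ^ 2 - 1) -> 'M[C]_dA) (GB : 'I_(dB ^ 2 - 1) -> 'M[C]_dB)
    (p1 p2 q1 q2 : nat) (u : 'cV[R]_p1) (v : 'cV[R]_p2)
    (alpha : 'cV[R]_q1) (beta : 'cV[R]_q2) (rho : 'M[C]_(dA * dB))
  : 'M[C]_(p1 + q1 * (dA ^ 2 - 1), p2 + q2 * (dB ^ 2 - 1)) :=
  block_mx (cmx u *m (cmx v)^T)
           (cmx u *m (cmx beta *t @TB dA dB kB GB rho)^T)
           ((cmx alpha *t @TA dA dB kA GA rho) *m (cmx v)^T)
           ((cmx alpha *m (cmx beta)^T) *t @TAB dA dB kA kB GA GB rho).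

End Defs.

(* Main.v *)
Require Import Defs.
From HB Require Import structures.
From mathcomp Require Import all_boot all_order all_algebra.
From mathcomp Require Import complex mxtens.
From mathcomp Require Import boolp classical_sets reals.
From mathcomp Require Import ring.

Import Order.TTheory GRing.Theory Num.Theory.
Local Open Scope ring_scope.

Section Core.
Set Implicit Arguments.
Unset Strict Implicit.
Local Open Scope sesquilinear_scope.
Variable R : realType.
Local Notation C := R[i].

Lemma tCmul m n p (A : 'M[C]_(m,n)) (B : 'M[C]_(n,p)) : (A *m B)^t* = B^t* *m A^t*.
Proof. by rewrite trmx_mul map_mxM. Qed.

Lemma tCB m n (A B : 'M[C]_(m,n)) : (A - B)^t* = A^t* - B^t*.
Proof. by apply/matrixP => i j; rewrite !mxE rmorphB. Qed.

Lemma mxEB m n (A B : 'M[C]_(m,n)) i j : (A - B) i j = A i j - B i j.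
Proof. by rewrite !mxE. Qed.

Lemma tC_diag n (d : 'rV[C]_n) : (diag_mx d)^t* = diag_mx (map_mx Num.conj d).
Proof. by rewrite tr_diag_mx map_diag_mx. Qed.

Lemma diag_mulmx n (a b : 'rV[C]_n) :
  diag_mx a *m diag_mx b = diag_mx (\row_j (a 0 j * b 0 j)).
Proof.
rewrite mul_diag_mx; apply/matrixP => i j; rewrite !mxE.
by case: (i == j); rewrite ?mulr1n ?mulr0n ?mulr0.
Qed.

Lemma tCdelta n (j : 'I_n) : (delta_mx j 0 : 'cV[C]_n)^t* = delta_mx 0 j.
Proof.
apply/matrixP => a b; rewrite !mxE.
by case: (_ == _); case: (_ == _); rewrite /= ?conjC1 ?conjC0.
Qed.

Lemma cv_nneg n (z : 'cV[C]_n) : 0 <= (z^t* *m z) 0 0.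
Proof.
rewrite mxE; apply: sumr_ge0 => i _; rewrite !mxE mulrC; exact: mul_conjC_ge0.
Qed.

Lemma core m n K (M : 'M[C]_(m,n)) (c : 'I_K -> C) (x : 'I_K -> 'cV[C]_m)
  (y : 'I_K -> 'cV[C]_n) (X Y : C) (S : 'M[C]_n) :
  (forall k, 0 <= c k) -> \sum_k c k = 1 ->
  (forall k, ((x k)^t* *m x k) 0 0 = X) -> (forall k, ((y k)^t* *m y k) 0 0 = Y) ->
  M = \sum_k c k *: (x k *m (y k)^T) ->
  S^t* = S -> (forall v : 'cV[C]_n, 0 <= (v^t* *m S *m v) 0 0) ->
  S *m S = M^t* *m M ->
  \tr S <= sqrtC (X * Y).
Proof.
move=> c0 c1 xX yY ME Sh Spsd SS.
have Snorm : S \is normalmx by apply/normalmxP; rewrite Sh.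
move/orthomx_spectralP: Snorm.
rewrite (invmx_unitary (spectral_unitarymx S)).
have := spectral_unitarymx S.
move: (spectralmx S) (spectral_diag S) => P s /unitarymxP Pu SE.
have Pu' : P^t* *m P = 1%:M by apply: mulmx1C.
set D := diag_mx s in SE.
have PSP : P *m S *m P^t* = D.
  by rewrite SE !mulmxA Pu mul1mx -mulmxA Pu mulmx1.
have s_ge0 j : 0 <= s 0 j.
  have := Spsd (P^t* *m delta_mx j 0).
  rewrite tCmul trmxCK tCdelta !mulmxA -(mulmxA _ P) -(mulmxA _ (P *m S)).
  by rewrite PSP -rowE -colE !mxE eqxx mulr1n.
have sR j : (s 0 j)^* = s 0 j by rewrite geC0_conj.
set t : 'rV[C]_n := \row_j (s 0 j)^-1.
set Dt := diag_mx t.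
have DtH : Dt^t* = Dt.
  rewrite /Dt tC_diag; congr diag_mx; apply/rowP => j; rewrite !mxE; by apply: geC0_conj; rewrite invr_ge0.
have DH : D^t* = D.
  by rewrite /D tC_diag; congr diag_mx; apply/rowP => j; rewrite !mxE sR.
set G := M *m P^t*.
have GG : G^t* *m G = D *m D.
  rewrite /G tCmul trmxCK !mulmxA -(mulmxA P) -SS -PSP.
  by rewrite !mulmxA -(mulmxA _ _ P) Pu' mulmx1.
set F := G *m Dt.
have e1 j : (s 0 j)^-1 * s 0 j * s 0 j = s 0 j.
  have [->|nz] := eqVneq (s 0 j) 0; first by rewrite !mulr0.
  by rewrite mulVf // mul1r.
have e2 j : (s 0 j)^-1 * ((s 0 j)^-1 * s 0 j * s 0 j * (s 0 j)^-1) = (s 0 j)^-1.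
  have [->|nz] := eqVneq (s 0 j) 0; first by rewrite invr0 !mul0r.
  by rewrite e1 divff // mulr1.
have FF : F^t* *m F = diag_mx (\row_j ((s 0 j)^-1 * s 0 j * s 0 j * (s 0 j)^-1)).
  rewrite /F tCmul DtH -mulmxA (mulmxA _ G) GG /Dt /D !diag_mulmx.
  by congr diag_mx; apply/rowP => j; rewrite !mxE !mulrA.
set Q := F *m F^t*.
have QQ : Q *m Q = Q.
  rewrite /Q mulmxA -(mulmxA F) FF; congr (_ *m _).
  rewrite /F -mulmxA /Dt diag_mulmx; congr (_ *m diag_mx _).
  by apply/rowP => j; rewrite !mxE e2.
have QH : Q^t* = Q by rewrite /Q tCmul trmxCK.
have trS : \tr S = \sum_j s 0 j.
  by rewrite SE mxtrace_mulC mulmxA Pu mul1mx mxtrace_diag.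
have trFG : \tr (F^t* *m G) = \tr S.
  rewrite trS /F tCmul DtH -mulmxA GG /Dt /D !diag_mulmx mxtrace_diag.
  by apply: eq_bigr => j _; rewrite !mxE mulrA e1.
have trdec : \tr (F^t* *m G) =
    \sum_k c k * (((y k)^T *m P^t*) *m (F^t* *m x k)) 0 0.
  rewrite /G ME mulmx_suml mulmx_sumr (big_morph _ (@mxtraceD _ _) (mxtrace0 _ _)).
  apply: eq_bigr => k _.
  rewrite -scalemxAl -scalemxAr mxtraceZ; congr (_ * _).
  by rewrite !mulmxA -(mulmxA (F^t* *m x k)) mxtrace_mulC trace_mx11 mulmxA.
have wb k : `|(((y k)^T *m P^t*) *m (F^t* *m x k)) 0 0| <= sqrtC (X * Y).
  set a := (y k)^T *m P^t*.
  set b := (F^t* *m x k)^t*.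
  have -> : (a *m (F^t* *m x k)) 0 0 = dotmx a b by rewrite dotmxE trmxCK.
  have CS : `|dotmx a b| ^+ 2 <= dotmx a a * dotmx b b :=
    (CauchySchwarz (dotmx (n:=n)) a b).1.
  have b0 : 0 <= dotmx b b := dnorm_ge0 (dotmx (n:=n)) b.
  have Ya : dotmx a a = Y.
    rewrite dotmxE /a tCmul trmxCK mulmxA -(mulmxA _ _ P) Pu' mulmx1 -(yY k).
    rewrite !mxE; apply: eq_bigr => i _; rewrite !mxE mulrC. by [].

  have Xb : dotmx b b <= X.
    rewrite dotmxE /b trmxCK tCmul trmxCK -(xX k) mulmxA -(mulmxA _ F).
    rewrite -/Q -subr_ge0.
    have := cv_nneg (x k - Q *m x k).
    rewrite tCB tCmul QH mulmxBl !mulmxBr (mulmxA ((x k)^t*) Q (x k)) (mulmxA ((x k)^t* *m Q) Q (x k)) -(mulmxA ((x k)^t*) Q Q) QQ subrr subr0 mxEB.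
    by [].
  have Y0 : 0 <= Y by rewrite -(yY k) cv_nneg.
  have X0 : 0 <= X by rewrite -(xX k) cv_nneg.
  rewrite -(sqrCK (normr_ge0 _)) ler_sqrtC ?nnegrE ?exprn_ge0 ?mulr_ge0 //.
  by apply: (le_trans CS); rewrite Ya mulrC; apply: ler_wpM2r.
have trS0 : 0 <= \tr S by rewrite trS sumr_ge0.
rewrite -(ger0_norm trS0) -trFG trdec.
apply: (le_trans (ler_norm_sum _ _ _)).
rewrite -[sqrtC _]mul1r -c1 mulr_suml; apply: ler_sum => k _.
by rewrite normrM (ger0_norm (c0 k)) ler_wpM2l.
Qed.

Lemma conjM (x y : C) : (x * y)^* = x^* * y^*.
Proof. exact: rmorphM. Qed.

Lemma trC n (A : 'M[C]_n) : \tr (A^t*) = (\tr A)^*.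
Proof. by rewrite /mxtrace rmorph_sum; apply: eq_bigr => i _; rewrite !mxE. Qed.

Lemma bloch d (kappa : R) (G : 'I_(d ^ 2 - 1) -> 'M[C]_d) (a : 'M[C]_d) :
  (0 < d)%N -> 0 < kappa -> good_basis kappa G -> is_pure_state a ->
  \sum_j (\tr (a *m G j))^* * \tr (a *m G j) = kappa%:C%C * (1 - d%:R^-1).
Proof.
move=> d0 k0 [_ fullG trG orth] [psi [psi1 aE]].
rewrite /dagmx in orth psi1 aE.
have {}psi1 : psi^t* *m psi = 1%:M by exact: psi1.
set k := kappa%:C%C in orth *.
have kR : k^* = k by apply: geC0_conj; rewrite ler0c ltW.
have aH : a^t* = a by rewrite aE tCmul trmxCK.
have tra : \tr a = 1.
  rewrite aE mxtrace_mulC; transitivity (\tr (1%:M : 'M[C]_1)).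
    by congr mxtrace.
  by rewrite mxtrace1.
have aa : a *m a = a.
  rewrite aE -mulmxA (mulmxA (psi^t*)) psi1 mul1mx //.
have /submxP [w wE] := submx_full (mxvec a) fullG.
rewrite -[w]hsubmxK mul_row_col in wE.
pose c0 : C := lsubmx w 0 0.
pose r i : C := rsubmx w 0 i.
have aD : a = c0 *: 1%:M + \sum_i r i *: G i.
  apply: (can_inj mxvecK); rewrite wE linearD /= linear_sum /= linearZ /=.
  congr (_ + _).
    rewrite mulmx_sum_row big_ord1; congr (_ *: _); apply/rowP => j.
    by rewrite !mxE.
  by rewrite mulmx_sum_row; apply: eq_bigr => i _; rewrite rowK linearZ.
have dn0 : (d%:R : C) != 0 by rewrite pnatr_eq0 -lt0n.
have c0E : c0 = d%:R^-1.
  have := tra; rewrite aD mxtraceD mxtraceZ mxtrace1 raddf_sum /=.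
  rewrite big1 ?addr0 => [|i _]; last by rewrite mxtraceZ trG mulr0.
  by move=> h; apply: (mulIf dn0); rewrite h mulVf.
have trsum (A : 'M[C]_d) : \tr (A *m a) = c0 * \tr A + \sum_i r i * \tr (A *m G i).
  rewrite aD mulmxDr mulmx_sumr mxtraceD -scalemxAr mxtraceZ mulmx1 raddf_sum /=.
  by congr (_ + _); apply: eq_bigr => i _; rewrite -scalemxAr mxtraceZ.
have trGa j : \tr ((G j)^t* *m a) = k * r j.
  rewrite trsum trC trG conjC0 mulr0 add0r (bigD1 j) //= big1 ?addr0.
    by rewrite orth eqxx mulr1 mulrC.
  by move=> i nij; rewrite orth eq_sym (negbTE nij) mulr0 mulr0.
have traG j : \tr (a *m G j) = k * (r j)^*.
  have h : (\tr ((G j)^t* *m a))^* = \tr (a *m G j).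
    by rewrite -trC tCmul trmxCK aH.
  by rewrite -h trGa conjM kR.
have one : 1 = d%:R^-1 + k * \sum_i r i * (r i)^*.
  rewrite -{1}tra -{1}aa -{1}aH trsum trC aH tra conjC1 mulr1 c0E; congr (_ + _).
  rewrite mulr_sumr; apply: eq_bigr => i _.
  by rewrite traG mulrCA.
have -> : 1 - d%:R^-1 = k * \sum_i r i * (r i)^*.
  by rewrite {1}one addrAC subrr add0r.
rewrite mulrA mulr_sumr; apply: eq_bigr => j _.
by rewrite traG conjM kR conjCK mulrACA.
Qed.

Lemma tens_norm m n (a : 'cV[C]_m) (b : 'cV[C]_n) :
  ((a *t b)^t* *m (a *t b)) 0 0 = (a^t* *m a) 0 0 * (b^t* *m b) 0 0.
Proof.
rewrite !mxE mulr_sum; apply: eq_bigr => l _; rewrite !mxE.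
rewrite !(ord1 (mxtens_unindex _).1) !(ord1 (mxtens_unindex _).2).
by rewrite conjM mulrACA.
Qed.

Lemma tr_tens m n (A : 'M[C]_m) (B : 'M[C]_n) : \tr (A *t B) = \tr A * \tr B.
Proof. by rewrite /mxtrace mulr_sum; apply: eq_bigr => l _; rewrite !mxE. Qed.

Lemma tens_sumZr I (r : seq I) m n p q (A : 'M[C]_(m,n)) (c : I -> C) (B : I -> 'M[C]_(p,q)) :
  A *t (\sum_(k <- r) c k *: B k) = \sum_(k <- r) c k *: (A *t B k).
Proof.
apply/matrixP => i j; rewrite !mxE !summxE mulr_sumr; apply: eq_bigr => k _.
by rewrite !mxE mulrCA.
Qed.

Lemma tens_sumZl I (r : seq I) m n p q (A : 'M[C]_(m,n)) (c : I -> C) (B : I -> 'M[C]_(p,q)) :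
  (\sum_(k <- r) c k *: B k) *t A = \sum_(k <- r) c k *: (B k *t A).
Proof.
apply/matrixP => i j; rewrite !mxE !summxE mulr_suml; apply: eq_bigr => k _.
by rewrite !mxE mulrA.
Qed.

Lemma tr_sumZ I (r : seq I) m n (c : I -> C) (B : I -> 'M[C]_(m,n)) :
  (\sum_(k <- r) c k *: B k)^T = \sum_(k <- r) c k *: (B k)^T.
Proof.
by apply/matrixP => i j; rewrite !mxE !summxE; apply: eq_bigr => k _; rewrite !mxE.
Qed.

Lemma mul_sumZr I (r : seq I) m n p (A : 'M[C]_(m,n)) (c : I -> C) (B : I -> 'M[C]_(n,p)) :
  A *m (\sum_(k <- r) c k *: B k) = \sum_(k <- r) c k *: (A *m B k).
Proof. by rewrite mulmx_sumr; apply: eq_bigr => k _; rewrite scalemxAr. Qed.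

Lemma mul_sumZl I (r : seq I) m n p (A : 'M[C]_(n,p)) (c : I -> C) (B : I -> 'M[C]_(m,n)) :
  (\sum_(k <- r) c k *: B k) *m A = \sum_(k <- r) c k *: (B k *m A).
Proof. by rewrite mulmx_suml; apply: eq_bigr => k _; rewrite scalemxAl. Qed.

Lemma sum_block I (r : seq I) m1 m2 n1 n2 (A : I -> 'M[C]_(m1,n1))
  (B : I -> 'M[C]_(m1,n2)) (D : I -> 'M[C]_(m2,n1)) (E : I -> 'M[C]_(m2,n2)) :
  \sum_(k <- r) block_mx (A k) (B k) (D k) (E k) =
  block_mx (\sum_(k <- r) A k) (\sum_(k <- r) B k) (\sum_(k <- r) D k) (\sum_(k <- r) E k).
Proof.
elim: r => [|h r IH]; first by rewrite !big_nil block_mx0.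
by rewrite !big_cons IH add_block_mx.
Qed.

Lemma tCcol m1 m2 n (A : 'M[C]_(m1,n)) (B : 'M[C]_(m2,n)) :
  (col_mx A B)^t* = row_mx (A^t*) (B^t*).
Proof. by rewrite tr_col_mx map_row_mx. Qed.

Lemma tCtens m n p q (A : 'M[C]_(m,n)) (B : 'M[C]_(p,q)) : (A *t B)^t* = (A^t*) *t (B^t*).
Proof. by apply/matrixP => i j; rewrite !mxE conjM. Qed.

Lemma mxED m n (A B : 'M[C]_(m,n)) i j : (A + B) i j = A i j + B i j.
Proof. by rewrite !mxE. Qed.

Lemma pure_tr d (a : 'M[C]_d) : is_pure_state a -> \tr a = 1.
Proof.
move=> [psi [psi1 ->]]; rewrite mxtrace_mulC.
transitivity (\tr (1%:M : 'M[C]_1)); first by congr mxtrace.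
by rewrite mxtrace1.
Qed.

Lemma conjR (r : R) : (r%:C%C)^* = r%:C%C.
Proof. by apply: conj_Creal; apply/complex_realP; exists r. Qed.

Lemma cmx_norm n (u : 'cV[R]_n) : ((cmx u)^t* *m cmx u) 0 0 = (enorm u ^+ 2)%:C%C.
Proof.
rewrite /enorm sqr_sqrtr ?sumr_ge0 // => [|i _]; last exact: sqr_ge0.
rewrite mxE rmorph_sum; apply: eq_bigr => i _; rewrite !mxE.
by rewrite conjR rmorphXn /= expr2.
Qed.

Lemma ta_norm d (kappa : R) (G : 'I_(d ^ 2 - 1) -> 'M[C]_d) (a : 'M[C]_d) :
  (0 < d)%N -> 0 < kappa -> good_basis kappa G -> is_pure_state a ->
  let ta := \col_i ((d%:R / kappa)%:C%C * \tr (a *m G i)) in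
  (ta^t* *m ta) 0 0 = ((d ^ 2 - d)%:R / kappa)%:C%C.
Proof.
move=> d0 k0 gb pa ta.
pose z : C := (d%:R / kappa)%:C%C.
transitivity (z * z * \sum_j (\tr (a *m G j))^* * \tr (a *m G j)).
  rewrite mxE mulr_sumr; apply: eq_bigr => j _; rewrite !mxE conjM conjR.
  by rewrite mulrACA.
rewrite (bloch d0 k0 gb pa) /z.
have -> : (1 - (d%:R : C)^-1) = (1 - (d%:R : R)^-1)%:C%C.
  by rewrite rmorphB rmorph1 fmorphV rmorph_nat.
rewrite -!rmorphM; congr (_%:C%C).
have dn0 : (d%:R : R) != 0 by rewrite pnatr_eq0 -lt0n.
have kn0 : kappa != 0 by rewrite gt_eqF.
rewrite natrB; last by rewrite -{1}(expn1 d) leq_pexp2l.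
rewrite natrX; field.
by rewrite kn0 dn0.
Qed.
Lemma main_aux (dA dB : nat) (kA kB : R)
    (GA : 'I_(dA ^ 2 - 1) -> 'M[R[i]]_dA)
    (GB : 'I_(dB ^ 2 - 1) -> 'M[R[i]]_dB)
    (p1 p2 q1 q2 : nat) (u : 'cV[R]_p1) (v : 'cV[R]_p2)
    (alpha : 'cV[R]_q1) (beta : 'cV[R]_q2) (rho : 'M[R[i]]_(dA * dB)) :
  (0 < dA)%N -> (0 < dB)%N ->
  1 <= kA -> 1 <= kB ->
  good_basis kA GA -> good_basis kB GB ->
  @separable R dA dB rho ->
  trnorm (@Mmat R dA dB kA kB GA GB p1 p2 q1 q2 u v alpha beta rho)
    <= (Num.sqrt
         ((enorm u ^+ 2 + enorm alpha ^+ 2 * ((dA ^ 2 - dA)%:R / kA))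
        * (enorm v ^+ 2 + enorm beta ^+ 2 * ((dB ^ 2 - dB)%:R / kB))))%:C%C.
Proof.
move=> dA0 dB0 kA1 kB1 gA gB [K [p [rA [rB [p0 p1s pure rhoE]]]]].
have kA0 : 0 < kA by apply: lt_le_trans kA1.
have kB0 : 0 < kB by apply: lt_le_trans kB1.
pose c k : C := (p k)%:C%C.
pose ta k : 'cV[C]_(dA ^ 2 - 1) := \col_i ((dA%:R / kA)%:C%C * \tr (rA k *m GA i)).
pose tb k : 'cV[C]_(dB ^ 2 - 1) := \col_j ((dB%:R / kB)%:C%C * \tr (rB k *m GB j)).
pose x k := col_mx (cmx u) (cmx alpha *t ta k).
pose y k := col_mx (cmx v) (cmx beta *t tb k).
have c0 k : 0 <= c k by rewrite ler0c.
have c1 : \sum_k c k = 1 by rewrite -rmorph_sum p1s.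
have trA k : \tr (rA k) = 1 by apply: pure_tr; case: (pure k).
have trB k : \tr (rB k) = 1 by apply: pure_tr; case: (pure k).
have trrho (X : 'M[C]_dA) (Y : 'M[C]_dB) :
    \tr (rho *m (X *t Y)) = \sum_k c k * (\tr (rA k *m X) * \tr (rB k *m Y)).
  rewrite rhoE mul_sumZl (big_morph _ (@mxtraceD _ _) (mxtrace0 _ _)).
  by apply: eq_bigr => k _; rewrite mxtraceZ tensmx_mul tr_tens.
have TAE : @TA R dA dB kA GA rho = \sum_k c k *: ta k.
  apply/matrixP => i j; rewrite !mxE summxE trrho mulr_sumr.
  by apply: eq_bigr => k _; rewrite !mxE mulmx1 trB mulr1 mulrCA.
have TBE : @TB R dA dB kB GB rho = \sum_k c k *: tb k.
  apply/matrixP => i j; rewrite !mxE summxE trrho mulr_sumr.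
  by apply: eq_bigr => k _; rewrite !mxE mulmx1 trA mul1r mulrCA.
have TABE : @TAB R dA dB kA kB GA GB rho = \sum_k c k *: (ta k *m (tb k)^T).
  apply/matrixP => i j; rewrite !mxE summxE trrho mulr_sumr.
  apply: eq_bigr => k _; rewrite !mxE big_ord1 !mxE.
  by rewrite -mulf_div rmorphM /=; ring.
have ME : @Mmat R dA dB kA kB GA GB p1 p2 q1 q2 u v alpha beta rho = \sum_k c k *: (x k *m (y k)^T).
  rewrite /Mmat /x /y.
  under eq_bigr do rewrite tr_col_mx mul_col_row scale_block_mx.
  rewrite sum_block; congr block_mx.
  - by rewrite -scaler_suml c1 scale1r.
  - by rewrite TBE tens_sumZr tr_sumZ mul_sumZr.
  - by rewrite TAE tens_sumZr mul_sumZl.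
  - rewrite TABE tens_sumZr; apply: eq_bigr => k _.
    by rewrite (trmx_tens (cmx beta) (tb k)) (tensmx_mul (cmx alpha) (ta k) ((cmx beta)^T) ((tb k)^T)).
set X := enorm u ^+ 2 + _.
set Y := enorm v ^+ 2 + _.
have X0 : 0 <= X.
  by rewrite addr_ge0 ?sqr_ge0 // mulr_ge0 ?sqr_ge0 // divr_ge0 // ltW.
have Y0 : 0 <= Y.
  by rewrite addr_ge0 ?sqr_ge0 // mulr_ge0 ?sqr_ge0 // divr_ge0 // ltW.
have xn k : ((x k)^t* *m x k) 0 0 = X%:C%C.
  rewrite /x tCcol mul_row_col mxED cmx_norm tens_norm cmx_norm.
  have := ta_norm dA0 kA0 gA (proj1 (pure k)); rewrite /= => ->.
  by rewrite /X rmorphD; congr (_ + _); rewrite -rmorphM.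
have yn k : ((y k)^t* *m y k) 0 0 = Y%:C%C.
  rewrite /y tCcol mul_row_col mxED cmx_norm tens_norm cmx_norm.
  have := ta_norm dB0 kB0 gB (proj2 (pure k)); rewrite /= => ->.
  by rewrite /Y rmorphD; congr (_ + _); rewrite -rmorphM.
rewrite /trnorm /psd_sqrt; case: xgetP => [S _ [[Sh Spsd] SS] | _]; last first.
  by rewrite mxtrace0 ler0c sqrtr_ge0.
have := core c0 c1 xn yn ME Sh Spsd SS.
rewrite -rmorphM.
have XY0 : 0 <= X * Y by rewrite mulr_ge0.
by rewrite -{1}(sqr_sqrtr XY0) rmorphXn sqrCK // ler0c sqrtr_ge0.
Qed.
End Core.

Theorem theorem1 (R : realType) (dA dB : nat) (kA kB : R)
    (GA : 'I_(dA ^ 2 - 1) -> 'M[R[i]]_dA)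
    (GB : 'I_(dB ^ 2 - 1) -> 'M[R[i]]_dB)
    (p1 p2 q1 q2 : nat) (u : 'cV[R]_p1) (v : 'cV[R]_p2)
    (alpha : 'cV[R]_q1) (beta : 'cV[R]_q2) (rho : 'M[R[i]]_(dA * dB)) :
  (0 < dA)%N -> (0 < dB)%N ->
  1 <= kA -> 1 <= kB ->
  good_basis kA GA -> good_basis kB GB ->
  (0 < p1)%N -> (0 < p2)%N -> (0 < q1)%N -> (0 < q2)%N ->
  is_state rho -> @separable R dA dB rho ->
  trnorm (@Mmat R dA dB kA kB GA GB p1 p2 q1 q2 u v alpha beta rho)
    <= (Num.sqrt
         ((enorm u ^+ 2 + enorm alpha ^+ 2 * ((dA ^ 2 - dA)%:R / kA))
        * (enorm v ^+ 2 + enorm beta ^+ 2 * ((dB ^ 2 - dB)%:R / kB))))%:C%C.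
Proof.
move=> dA0 dB0 kA1 kB1 gA gB _ _ _ _ _ sep.
exact: main_aux.
Qed.
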